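(* In the setting below, fix $m\ge2$, $p=1$ and the item parameters $\beta^*$, and let the number of users $n\to\infty$ with user parameters $\theta^*_1,\dots,\theta^*_n$ (possibly depending on $n$) such that $\gamma\ge\gamma_0$ for all $n$, for some constant $\gamma_0>0$ independent of $n$. Then the output $\beta$ of the spectral algorithm is a consistent estimator of $\beta^*$: for every $\epsilon>0$, $$\lim_{n\to\infty}\Pr\big(\|\beta-\beta^*\|_2<\epsilon\big)=1 .$$
   Context: Setting. Let $n\ge1$ (number of users) and $m\ge2$ (number of items). Fix user parameters $\theta^*_1,\dots,\theta^*_n\in\mathbb R$ and item parameters $\beta^*_1,\dots,\beta^*_m\in\mathbb R$ normalized so that $\sum_{i=1}^m\beta^*_i=0$. Write $w^*_i=e^{\beta^*_i}$, $\kappa=\max_i\beta^*_i-\min_i\beta^*_i$, and $\pi^*_i=w^*_i/\sum_{k=1}^m w^*_k$. Random sampling scheme: the assignment matrix $A\in\{0,1\}^{n\times m}$ has i.i.d. Bernoulli$(p)$ entries, $p\in(0,1]$; independently of $A$, the responses $X_{li}\in\{0,1\}$ ($l\in[n]$, $i\in[m]$) are independent with $\Pr(X_{li}=1)=e^{\theta^*_l}/(e^{\theta^*_l}+e^{\beta^*_i})$ (only responses with $A_{li}=1$ are used). Let $\gamma=\min_{l\in[n],\,i\ne j\in[m]}\mathbb E[X_{li}(1-X_{lj})]$. Let $B=A^\top A$ and $d=\frac32 mnp^2$. Define $m\times m$ matrices $P,P^*$ by, for $i\neq j$, $P_{ij}=\frac1d\sum_{l=1}^nA_{li}A_{lj}X_{li}(1-X_{lj})$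 and $P^*_{ij}=\frac1d\sum_{l=1}^nA_{li}A_{lj}\mathbb E[X_{li}(1-X_{lj})]$, and $P_{ii}=1-\sum_{k\ne i}P_{ik}$, $P^*_{ii}=1-\sum_{k\ne i}P^*_{ik}$. Spectral algorithm: compute a stationary distribution $\pi$ of $P$ (a probability vector with $\pi^\top P=\pi^\top$) and output $\beta\in\mathbb R^m$ with $\beta_i=\log\pi_i-\frac1m\sum_{k=1}^m\log\pi_k$. $\|\cdot\|_2$ denotes the Euclidean norm of vectors. *)

(* Defs.v *)
From HB Require Import structures.
From mathcomp Require Import all_boot all_order all_algebra.
From mathcomp Require Import all_classical all_reals all_analysis.
Set Implicit Arguments. Unset Strict Implicit. Unset Printing Implicit Defensive.
Import Order.TTheory GRing.Theory Num.Theory.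
Local Open Scope ring_scope.

Section Spectral.
Variable R : realType.

(* Pr(X_li = 1) = e^theta / (e^theta + e^beta) *)
Definition rasch_q (th b : R) : R := expR th / (expR th + expR b).

(* E[X_li (1 - X_lj)] for i <> j (independent responses); gamma is the
   minimum of these over l and i <> j. *)
Definition pair_mean (n m : nat) (theta : 'I_n -> R) (beta : 'I_m -> R)
  (l : 'I_n) (i j : 'I_m) : R :=
  rasch_q (theta l) (beta i) * (1 - rasch_q (theta l) (beta j)).

(* outcome of the random experiment: assignment matrix A and responses X *)
Definition outcome (n m : nat) : finType :=
  ({ffun 'I_n * 'I_m -> bool} * {ffun 'I_n * 'I_m -> bool})%type.

(* probability weight of an outcome: A_li iid Bernoulli(p), X_li independent
   Bernoulli(rasch_q), A independent of X *)
Definition outcome_weight (n m : nat) (theta : 'I_n -> R) (beta : 'I_m -> R)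
  (p : R) (w : outcome n m) : R :=
  (\prod_(li : 'I_n * 'I_m) (if w.1 li then p else 1 - p)) *
  (\prod_(li : 'I_n * 'I_m)
      (if w.2 li then rasch_q (theta li.1) (beta li.2)
       else 1 - rasch_q (theta li.1) (beta li.2))).

Definition b2R (b : bool) : R := if b then 1 else 0.

Definition spec_P (n m : nat) (p : R) (A X : {ffun 'I_n * 'I_m -> bool})
  : 'M[R]_m :=
  let d := 3 / 2 * m%:R * n%:R * p ^+ 2 in
  let off := fun i j : 'I_m =>
     d^-1 * \sum_(l < n) b2R (A (l, i)) * b2R (A (l, j)) *
                         b2R (X (l, i)) * (1 - b2R (X (l, j))) in
  \matrix_(i, j) (if i == j then 1 - \sum_(k < m | k != i) off i k
                  else off i j).

Definition stationary (m : nat) (P : 'M[R]_m) (pi : 'rV[R]_m) : Prop :=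
  (forall i, 0 <= pi 0 i) /\ \sum_i pi 0 i = 1 /\ pi *m P = pi.

Definition spec_beta (m : nat) (pi : 'rV[R]_m) (i : 'I_m) : R :=
  ln (pi 0 i) - m%:R^-1 * \sum_(k < m) ln (pi 0 k).

Definition dist2 (m : nat) (u v : 'I_m -> R) : R :=
  Num.sqrt (\sum_(i < m) (u i - v i) ^+ 2).

(* success event: every stationary distribution pi of P is entrywise
   positive (so log pi is defined) and the resulting beta is eps-close *)
Definition success (n m : nat) (beta : 'I_m -> R) (p eps : R)
  (w : outcome n m) : Prop :=
  forall pi : 'rV[R]_m, stationary (spec_P p w.1 w.2) pi ->
    (forall i, 0 < pi 0 i) /\ dist2 (spec_beta pi) beta < eps.

Definition success_prob (n m : nat) (theta : 'I_n -> R) (beta : 'I_m -> R)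
  (p eps : R) : R :=
  \sum_(w : outcome n m | `[< success beta p eps w >]) outcome_weight theta beta p w.

End Spectral.

(* Main.v *)
Require Import Defs.
From HB Require Import structures.
From mathcomp Require Import all_boot all_order all_algebra.
From mathcomp Require Import all_classical all_reals all_analysis.
From mathcomp Require Import ring lra.
Import Order.TTheory GRing.Theory Num.Theory numFieldNormedType.Exports.
Local Open Scope classical_set_scope.
Local Open Scope ring_scope.


Section Prob.
Variable R : realType.
Variable T : finType.
Variable q : T -> R.
Hypothesis q01 : forall t, 0 <= q t <= 1.

Definition Wt (x : {ffun T -> bool}) : R := \prod_t (if x t then q t else 1 - q t).
Definition Ex (f : {ffun T -> bool} -> R) : R := \sum_x Wt x * f x.

Lemma Ex_prod (F : T -> bool -> R) :
  Ex (fun x => \prod_t F t (x t)) = \prod_t (q t * F t true + (1 - q t) * F t false).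
Proof.
rewrite /Ex /Wt.
have -> : \prod_t (q t * F t true + (1 - q t) * F t false) =
   \prod_t \sum_(b : bool) (if b then q t else 1 - q t) * F t b.
  by apply: eq_bigr => t _; rewrite big_bool.
rewrite bigA_distr_bigA /=; apply: eq_bigr => x _.
by rewrite -big_split.
Qed.

Lemma Wt_ge0 x : 0 <= Wt x.
Proof.
apply: prodr_ge0 => t _; case: (x t); have := q01 t; case/andP => ? ?; lra.
Qed.

Lemma Ex_ext f g : (forall x, f x = g x) -> Ex f = Ex g.
Proof. by move=> H; apply: eq_bigr => x _; rewrite H. Qed.

Lemma Ex_1 : Ex (fun=> 1) = 1.
Proof.
rewrite (@Ex_ext _ (fun x => \prod_t (fun _ _ => (1:R)) t (x t))); last first.
  by move=> x; rewrite big1.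
rewrite (Ex_prod (fun _ _ => 1)) big1 // => t _; ring.
Qed.

Lemma Ex_add f g : Ex (fun x => f x + g x) = Ex f + Ex g.
Proof. by rewrite /Ex -big_split; apply: eq_bigr => x _; rewrite mulrDr. Qed.

Lemma Ex_scal c f : Ex (fun x => c * f x) = c * Ex f.
Proof. by rewrite /Ex mulr_sumr; apply: eq_bigr => x _; rewrite mulrCA. Qed.

Lemma Ex_const c : Ex (fun=> c) = c.
Proof. by rewrite (@Ex_ext _ (fun x => c * 1)) ?Ex_scal ?Ex_1 ?mulr1. Qed.

Lemma Ex_sum (I : finType) (f : I -> {ffun T -> bool} -> R) :
  Ex (fun x => \sum_i f i x) = \sum_i Ex (f i).
Proof.
rewrite /Ex exchange_big /=; apply: eq_bigr => x _; by rewrite mulr_sumr.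
Qed.

Lemma Ex_le f g : (forall x, f x <= g x) -> Ex f <= Ex g.
Proof.
move=> H; apply: ler_sum => x _; apply: ler_wpM2l; [exact: Wt_ge0| exact: H].
Qed.
End Prob.
Arguments Ex {R T} q f.
Arguments Wt {R T} q x.
Arguments Ex_prod {R T} q F.
Arguments Ex_ext {R T q} f g.
Arguments Ex_1 {R T} q.
Arguments Ex_add {R T q} f g.
Arguments Ex_scal {R T q} c f.
Arguments Ex_const {R T} q c.
Arguments Ex_sum {R T q I} f.
Arguments Ex_le {R T q} q01 {f g}.
Arguments Wt_ge0 {R T q} q01 x.


Section Rasch.
Variable R : realType.

Lemma rasch_q01 (th b : R) : 0 < rasch_q th b < 1.
Proof.
rewrite /rasch_q; have h1 := expR_gt0 th; have h2 := expR_gt0 b.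
apply/andP; split; first by apply: divr_gt0 => //; lra.
rewrite ltr_pdivrMr; lra.
Qed.

Lemma rasch_q1 (th b : R) : 1 - rasch_q th b = expR b / (expR th + expR b).
Proof.
rewrite /rasch_q; have h1 := expR_gt0 th; have h2 := expR_gt0 b.
have h : expR th + expR b != 0 by rewrite gt_eqF //; lra.
by field.
Qed.

Lemma pair_mean_sym n m (theta : 'I_n -> R) (beta : 'I_m -> R) l i j :
  expR (beta i) * pair_mean theta beta l i j = expR (beta j) * pair_mean theta beta l j i.
Proof.
rewrite /pair_mean !rasch_q1 /rasch_q.
have h1 := expR_gt0 (theta l); have h2 := expR_gt0 (beta i); have h3 := expR_gt0 (beta j).
have ha : expR (theta l) + expR (beta i) != 0 by rewrite gt_eqF //; lra.
have hb : expR (theta l) + expR (beta j) != 0 by rewrite gt_eqF //; lra.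
by ring.
Qed.
End Rasch.

Section Cheb.
Variable R : realType.
Variables (n m : nat) (theta : 'I_n -> R) (beta : 'I_m -> R) (i j : 'I_m).
Hypothesis ij : i != j.

Definition qq (t : 'I_n * 'I_m) : R := rasch_q (theta t.1) (beta t.2).
Lemma qq01 t : 0 <= qq t <= 1.
Proof. by have /andP[a b] := rasch_q01 _ (theta t.1) (beta t.2); rewrite /qq; apply/andP; split; lra. Qed.

Definition Y (l : 'I_n) (x : {ffun 'I_n * 'I_m -> bool}) : R :=
  b2R R (x (l, i)) * (1 - b2R R (x (l, j))).
Definition mu (l : 'I_n) : R := pair_mean theta beta l i j.

Lemma prod_sel (G : 'I_n * 'I_m -> R) (L : pred 'I_n) :
  (forall t, ~~ L t.1 -> G t = 1) -> (forall t, t.2 != i -> t.2 != j -> G t = 1) ->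
  \prod_t G t = \prod_(l | L l) (G (l, i) * G (l, j)).
Proof.
move=> H1 H2.
rewrite (eq_bigr (fun p => G (p.1, p.2))); last by case.
rewrite -(pair_bigA _ (fun l k => G (l, k))) /= [RHS]big_mkcond /=; apply: eq_bigr => l _.
case: ifP => Ll.
  rewrite (bigD1 i) //= (bigD1 j) /=; last by rewrite eq_sym.
  rewrite big1 ?mulr1 // => k /andP[ki kj]; exact: H2.
by rewrite big1 // => k _; apply: H1; rewrite /= Ll.
Qed.

Definition FL (L : pred 'I_n) (t : 'I_n * 'I_m) (b : bool) : R :=
  if L t.1 then (if t.2 == i then b2R R b else if t.2 == j then 1 - b2R R b else 1) else 1.


Lemma prodFL L (x : {ffun 'I_n * 'I_m -> bool}) : \prod_t FL L t (x t) = \prod_(l | L l) Y l x.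
Proof.
rewrite (prod_sel (fun t => FL L t (x t)) L).
- apply: eq_bigr => l Ll; rewrite /FL /Y /= Ll eqxx eq_sym (negbTE ij) eqxx //.
- by move=> t Lt; rewrite /FL (negbTE Lt).
- by move=> t ti tj; rewrite /FL (negbTE ti) (negbTE tj); case: ifP.
Qed.

Lemma ExFL L : Ex qq (fun x => \prod_t FL L t (x t)) = \prod_(l | L l) mu l.
Proof.
rewrite Ex_prod (prod_sel _ L).
- apply: eq_bigr => l Ll; rewrite /FL /mu /pair_mean /qq /b2R /= Ll eqxx eq_sym (negbTE ij) eqxx /=; ring.
- by move=> t Lt; rewrite /FL (negbTE Lt); ring.
- by move=> t ti tj; rewrite /FL (negbTE ti) (negbTE tj); case: ifP => _; ring.
Qed.

Lemma Ex_Y l : Ex qq (Y l) = mu l.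
Proof.
have := ExFL (pred1 l); rewrite !big_pred1_eq => <-.
by apply: Ex_ext => x; rewrite prodFL big_pred1_eq.
Qed.

Lemma pred2_prod (F : 'I_n -> R) l l' : l != l' ->
  \prod_(k | (k == l) || (k == l')) F k = F l * F l'.
Proof.
move=> ll; rewrite (bigD1 l) ?eqxx //= (big_pred1 l') // => k /=.
case: (eqVneq k l) => [->|kl]; first by move: ll; case: eqP.
by rewrite orFb andbT.
Qed.

Lemma Ex_YY l l' : l != l' -> Ex qq (fun x => Y l x * Y l' x) = mu l * mu l'.
Proof.
move=> ll; have := ExFL [pred k | (k == l) || (k == l')].
rewrite /= pred2_prod // => <-.
by apply: Ex_ext => x; rewrite prodFL /= pred2_prod.
Qed.

Lemma Y01 l x : 0 <= Y l x <= 1.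
Proof. by rewrite /Y /b2R; case: (x (l,i)); case: (x (l,j)); apply/andP; split; lra. Qed.

Lemma mu01 l : 0 <= mu l <= 1.
Proof.
rewrite /mu /pair_mean; have /andP[a b] := rasch_q01 _ (theta l) (beta i).
have /andP[c d] := rasch_q01 _ (theta l) (beta j).
apply/andP; split; nra.
Qed.

Definition Dev (x : {ffun 'I_n * 'I_m -> bool}) : R := \sum_l (Y l x - mu l).

Lemma var_bound : Ex qq (fun x => Dev x ^+ 2) <= n%:R.
Proof.
rewrite (Ex_ext _ (fun x => \sum_l \sum_l' (Y l x - mu l) * (Y l' x - mu l'))); last first.
  by move=> x; rewrite /Dev expr2 mulr_suml; apply: eq_bigr => l _; rewrite mulr_sumr.
rewrite Ex_sum.
have -> : n%:R = \sum_(l < n) (1 : R) by rewrite sumr_const card_ord.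
apply: ler_sum => l _; rewrite Ex_sum (bigD1 l) //= big1 ?addr0.
  apply: le_trans (_ : Ex qq (fun=> 1) <= 1).
    apply: (Ex_le (qq01)) => x; have /andP[a b] := Y01 l x; have /andP[c d] := mu01 l; nra.
  by rewrite Ex_1.
move=> l' ll'.
rewrite (Ex_ext _ (fun x => Y l x * Y l' x + (- mu l') * Y l x + (- mu l) * Y l' x + mu l * mu l')); last by move=> x; ring.
rewrite !Ex_add !Ex_scal Ex_const Ex_YY; last by rewrite eq_sym.
rewrite !Ex_Y /mu /pair_mean; ring.
Qed.

Lemma cheb (a : R) : 0 < a ->
  Ex qq (fun x => if a <= `|Dev x| then 1 else 0) <= n%:R / a ^+ 2.
Proof.
move=> a0; apply: le_trans (_ : Ex qq (fun x => a ^-2 * Dev x ^+ 2) <= _).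
  apply: (Ex_le (qq01)) => x; case: ifP => h; last by apply: mulr_ge0; [rewrite invr_ge0 exprn_ge0 // ltW|exact: sqr_ge0].
  have hD : `|Dev x| ^+ 2 = Dev x ^+ 2 := real_normK (num_real _).
  have hn := normr_ge0 (Dev x).
  have ha2 : a ^+ 2 <= Dev x ^+ 2 by rewrite -hD; nra.
  have hi : a ^-2 * a ^+ 2 = 1 by rewrite mulVf // expf_neq0 // gt_eqF.
  have hi0 : 0 <= a ^-2 by rewrite invr_ge0 exprn_ge0 // ltW.
  nra.
rewrite Ex_scal mulrC; apply: ler_wpM2r; first by rewrite invr_ge0 exprn_ge0 // ltW.
exact: var_bound.
Qed.
End Cheb.


Section Det.
Variable R : realType.
Variable m : nat.

Lemma balance (P : 'M[R]_m) (pi : 'rV[R]_m) j :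
  (forall i, P i i = 1 - \sum_(k | k != i) P i k) -> pi *m P = pi ->
  \sum_(i | i != j) pi 0 i * P i j = pi 0 j * \sum_(k | k != j) P j k.
Proof.
move=> Hd Hs.
have := congr1 (fun M : 'rV[R]_m => M 0 j) Hs; rewrite /= mxE (bigD1 j) //= Hd.
rewrite mulrBr mulr1 => h; lra.
Qed.

Lemma sum_sub_le (F : 'I_m -> R) j : (forall i, 0 <= F i) ->
  \sum_(i | i != j) F i <= \sum_i F i.
Proof. by move=> H; rewrite [X in _ <= X](bigD1 j) //=; apply: ler_wpDl. Qed.

Lemma det_bound (P : 'M[R]_m) (Q : 'I_m -> 'I_m -> R) (ps : 'I_m -> R)
  (pi : 'rV[R]_m) (c q0 dl : R) :
  (forall i, 0 < ps i) -> \sum_i ps i = 1 -> (forall i, c <= ps i) -> 0 < c -> 0 < q0 ->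
  0 <= dl ->
  (forall i j, i != j -> q0 <= Q i j) -> (forall i j, ps i * Q i j = ps j * Q j i) ->
  (forall i, P i i = 1 - \sum_(k | k != i) P i k) ->
  (forall i j, i != j -> `|P i j - Q i j| <= dl) ->
  stationary P pi ->
  forall i, `|pi 0 i / ps i - 1| <= (m%:R + 1) * dl / (c * q0).
Proof.
move=> ps0 ps1 psc c0 q00 dl0 Qlb Qsym Pd PQ [pi0 [pi1 piS]] i0.
pose r i := pi 0 i / ps i.
have pir i : pi 0 i = ps i * r i by rewrite /r mulrC divfK // gt_eqF.
have pile1 i : pi 0 i <= 1.
  by rewrite -pi1 (bigD1 i) //=; apply: ler_wpDr => //; apply: sumr_ge0.
have key j : \sum_(i | i != j) ps i * Q i j * (r j - r i) <= (m%:R + 1) * dl.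
  have hb := balance P pi j Pd piS.
  have -> : \sum_(i | i != j) ps i * Q i j * (r j - r i) =
      \sum_(i | i != j) (pi 0 j * (Q j i - P j i) + pi 0 i * (P i j - Q i j)).
    transitivity (\sum_(i | i != j) (pi 0 j * Q j i - pi 0 i * Q i j)).
      apply: eq_bigr => i _; rewrite !pir mulrBr {1}Qsym; ring.
    rewrite [RHS](eq_bigr (fun i => (pi 0 j * Q j i - pi 0 i * Q i j) +
                                     (pi 0 i * P i j - pi 0 j * P j i))); last by move=> i _; ring.
    have e : \sum_(i | i != j) (pi 0 i * P i j - pi 0 j * P j i) = 0.
      by rewrite sumrB hb mulr_sumr subrr.
    by rewrite [RHS]big_split /= e addr0.
  apply: le_trans (_ : \sum_(i | i != j) (pi 0 j * dl + pi 0 i * dl) <= _).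
    apply: ler_sum => i ij; apply: lerD.
      apply: le_trans (_ : pi 0 j * `|Q j i - P j i| <= _).
        by apply: ler_wpM2l => //; apply: ler_norm.
      by apply: ler_wpM2l => //; rewrite distrC; apply: PQ; rewrite eq_sym.
    apply: le_trans (_ : pi 0 i * `|P i j - Q i j| <= _).
      by apply: ler_wpM2l => //; apply: ler_norm.
    by apply: ler_wpM2l => //; apply: PQ.
  apply: le_trans (sum_sub_le (fun i => pi 0 j * dl + pi 0 i * dl) j _) _.
    by move=> i; apply: addr_ge0; apply: mulr_ge0.
  rewrite big_split /= sumr_const card_ord -mulr_suml pi1 mul1r -[pi 0 j * dl *+ m]mulr_natr.
  have hm : 0 <= m%:R :> R by []. have h1 : 0 <= 1 - pi 0 j by rewrite subr_ge0. have := mulr_ge0 (mulr_ge0 dl0 hm) h1. nra.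
have t0 : 0 <= (m%:R + 1) * dl / (c * q0).
  by apply: divr_ge0; [apply: mulr_ge0 => //; apply: addr_ge0 | apply: mulr_ge0; apply: ltW].
case: (@arg_maxP _ _ _ i0 predT r isT) => j _ jmax.
have psr : \sum_i ps i * r i = 1 by rewrite -pi1; apply: eq_bigr => i _; rewrite pir.
have rj1 : 1 <= r j.
  rewrite -psr; apply: le_trans (_ : \sum_i ps i * r j <= _).
    by apply: ler_sum => i _; apply: ler_wpM2l; [apply: ltW | apply: jmax].
  by rewrite -mulr_suml ps1 mul1r.
have rdiff i : r j - r i <= (m%:R + 1) * dl / (c * q0).
  case: (eqVneq i j) => [->|ij]; first by rewrite subrr.
  rewrite ler_pdivlMr; last by apply: mulr_gt0.
  have hji : 0 <= r j - r i by rewrite subr_ge0; apply: jmax.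
  apply: le_trans (key j).
  apply: le_trans (_ : ps i * Q i j * (r j - r i) <= _).
    rewrite mulrC; apply: ler_wpM2r => //; apply: ler_pM; try exact: ltW.
      exact: psc.
    exact: Qlb.
  rewrite [X in _ <= X](bigD1 i) //=; apply: ler_wpDr; last exact: lexx.
  apply: sumr_ge0 => k /andP[kj _]; apply: mulr_ge0; last by rewrite subr_ge0; apply: jmax.
  apply: mulr_ge0; first exact: ltW.
  by apply: le_trans (Qlb _ _ kj); apply: ltW.
set t := (m%:R + 1) * dl / (c * q0) in rdiff t0 *.
have rjub : r j <= 1 + t.
  suff : r j - t <= 1 by lra.
  rewrite -psr; apply: le_trans (_ : \sum_i ps i * (r j - t) <= _).
    by rewrite -mulr_suml ps1 mul1r.
  apply: ler_sum => i _; apply: ler_wpM2l; first exact: ltW.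
  have := rdiff i; lra.
have := rdiff i0; have := jmax i0 isT; rewrite -/(r i0) => hm hd.
have hm2 : r i0 <= r j := hm.
rewrite ler_norml; apply/andP; split; lra.
Qed.
End Det.


Section Fin.
Variable R : realType.

Lemma ln_abs_bound (r t : R) : 0 <= t -> t <= 1/2 -> `|r - 1| <= t -> `|ln r| <= 2 * t.
Proof.
move=> t0 th; rewrite ler_norml => /andP[h1 h2].
have r0 : 0 < r by lra.
rewrite ler_norml; apply/andP; split.
  have hi : r * r^-1 = 1 by rewrite mulfV // gt_eqF.
  have hi0 : 0 < r^-1 by rewrite invr_gt0.
  have e : 1 + (r^-1 - 1) = r^-1 by ring.
  have := @le_ln1Dx _ (r^-1 - 1); rewrite e lnV ?posrE // => h.
  have : r^-1 - 1 <= 2 * t by nra.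
  have : -1 < r^-1 - 1 by lra.
  move=> a b; have := h a; lra.
have e : 1 + (r - 1) = r by ring.
have := @le_ln1Dx _ (r - 1); rewrite e => h.
have : -1 < r - 1 by lra.
move=> a; have := h a; lra.
Qed.

Lemma final_bound (m : nat) (beta : 'I_m -> R) (pi : 'rV[R]_m) (t eps : R) :
  (0 < m)%N -> \sum_i beta i = 0 -> 0 <= t -> t <= 1/2 ->
  16 * m%:R * t ^+ 2 < eps ^+ 2 -> 0 < eps ->
  (forall i, `|pi 0 i / (expR (beta i) / \sum_k expR (beta k)) - 1| <= t) ->
  (forall i, 0 < pi 0 i) /\ dist2 (spec_beta pi) beta < eps.
Proof.
move=> m0 sb t0 th tep ep H.
set Z := \sum_k expR (beta k) in H.
have Z0 : 0 < Z.
  rewrite /Z (bigD1 (Ordinal m0)) //=; apply: ltr_wpDr; last exact: expR_gt0.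
  by apply: sumr_ge0 => k _; apply: ltW; apply: expR_gt0.
pose ps i := expR (beta i) / Z.
have ps0 i : 0 < ps i by apply: divr_gt0 => //; apply: expR_gt0.
pose r i := pi 0 i / ps i.
have pir i : pi 0 i = ps i * r i by rewrite /r mulrC divfK // gt_eqF.
have r0 i : 0 < r i.
  have := H i; rewrite -/(ps i) -/(r i) ler_norml => /andP[a b]; lra.
have pi0 i : 0 < pi 0 i by rewrite pir mulr_gt0.
split => //.
have lnpi i : ln (pi 0 i) = beta i - ln Z + ln (r i).
  by rewrite pir lnM ?posrE // /ps ln_div ?posrE ?expR_gt0 // expRK.
have mR : m%:R != 0 :> R by rewrite pnatr_eq0 -lt0n.
have sumln : m%:R^-1 * \sum_k ln (pi 0 k) = - ln Z + m%:R^-1 * \sum_k ln (r k).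
  rewrite (eq_bigr (fun k => beta k - ln Z + ln (r k))); last by move=> k _; exact: lnpi.
  rewrite big_split /= sumrB sb sumr_const card_ord sub0r -[ln Z *+ m]mulr_natr.
  by field.
have diff i : spec_beta pi i - beta i = ln (r i) - m%:R^-1 * \sum_k ln (r k).
  by rewrite /spec_beta sumln lnpi; ring.
have Lb i : `|ln (r i)| <= 2 * t by apply: ln_abs_bound => //; exact: H.
have avg : `|m%:R^-1 * \sum_k ln (r k)| <= 2 * t.
  rewrite normrM ger0_norm ?invr_ge0 //.
  apply: le_trans (_ : m%:R^-1 * \sum_(k < m) 2 * t <= _).
    apply: ler_wpM2l; first by rewrite invr_ge0.
    by apply: le_trans (ler_norm_sum _ _ _) _; apply: ler_sum => k _; exact: Lb.
  by rewrite sumr_const card_ord -[_ *+ m]mulr_natr [X in X <= _](_ : _ = 2 * t) //; field.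
have sq i : (spec_beta pi i - beta i) ^+ 2 <= 16 * t ^+ 2.
  rewrite diff -real_normK ?num_real //.
  have : `|ln (r i) - m%:R^-1 * \sum_k ln (r k)| <= 4 * t.
    by apply: le_trans (ler_normB _ _) _; have := Lb i; lra.
  have := normr_ge0 (ln (r i) - m%:R^-1 * \sum_k ln (r k)); nra.
rewrite /dist2.
have S : \sum_i (spec_beta pi i - beta i) ^+ 2 < eps ^+ 2.
  apply: le_lt_trans tep.
  apply: le_trans (_ : \sum_(i < m) 16 * t ^+ 2 <= _); first by apply: ler_sum => i _; exact: sq.
  by rewrite sumr_const card_ord -[_ *+ m]mulr_natr [X in X <= _](_ : _ = 16 * m%:R * t ^+ 2) //; ring.
rewrite -(ger0_norm (ltW ep)) -sqrtr_sqr ltr_sqrt //.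
by apply: exprn_gt0.
Qed.
End Fin.


Section Link.
Variable R : realType.
Variables (n m : nat) (theta : 'I_n -> R) (beta : 'I_m -> R).

Definition Atrue : {ffun 'I_n * 'I_m -> bool} := [ffun _ => true].

Lemma det_link (gamma0 c t eps : R) (X : {ffun 'I_n * 'I_m -> bool}) :
  (0 < n)%N -> (2 <= m)%N -> \sum_i beta i = 0 -> 0 < gamma0 ->
  (forall l i j, i != j -> gamma0 <= pair_mean theta beta l i j) ->
  0 < c -> (forall i, c <= expR (beta i) / \sum_k expR (beta k)) ->
  0 <= t -> t <= 1/2 -> 16 * m%:R * t ^+ 2 < eps ^+ 2 -> 0 < eps ->
  (forall i j, i != j -> `|Dev R n m theta beta i j X| <
       (3 / 2 * m%:R * n%:R * 1 ^+ 2) * (t * (c * (gamma0 / (3 / 2 * m%:R))) / (m%:R + 1))) ->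
  success beta 1 eps (Atrue, X).
Proof.
move=> n0 m2 sb g0 hg c0 hc t0 th tep ep hD pi st.
have m0 : (0 < m)%N by apply: leq_trans m2.
set Z := \sum_k expR (beta k) in hc *.
have Z0 : 0 < Z.
  rewrite /Z (bigD1 (Ordinal m0)) //=; apply: ltr_wpDr; last exact: expR_gt0.
  by apply: sumr_ge0 => k _; apply: ltW; apply: expR_gt0.
have mR : (0 < m%:R :> R) by rewrite ltr0n.
have nR : (0 < n%:R :> R) by rewrite ltr0n.
set d := 3 / 2 * m%:R * n%:R * 1 ^+ 2 in hD *.
have d0 : 0 < d by rewrite /d expr1n mulr1; apply: mulr_gt0 => //; apply: mulr_gt0 => //.
set q0 := gamma0 / (3 / 2 * m%:R) in hD *.
have q00 : 0 < q0 by apply: divr_gt0 => //; apply: mulr_gt0.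
set dl := t * (c * q0) / (m%:R + 1) in hD *.
have dl0 : 0 <= dl by apply: divr_ge0; [apply: mulr_ge0 => //; apply: ltW; apply: mulr_gt0 | apply: addr_ge0].
pose ps i := expR (beta i) / Z.
pose Q i j := d^-1 * \sum_l pair_mean theta beta l i j.
have HB := @det_bound R m (spec_P 1 Atrue X) Q ps pi c q0 dl.
have tdl : (m%:R + 1) * dl / (c * q0) = t.
  rewrite /dl; field; rewrite !gt_eqF //; lra.

rewrite tdl in HB.
apply: (@final_bound R m beta pi t eps) => //; last first.
  apply: HB => //.
  - by move=> i; apply: divr_gt0 => //; apply: expR_gt0.
  - by rewrite /ps -mulr_suml mulfV // gt_eqF.





- move=> i j ij; rewrite /Q.
  have e : q0 = d^-1 * (n%:R * gamma0).
    rewrite /q0 /d expr1n mulr1; field; rewrite !gt_eqF //; lra.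
  rewrite e; apply: ler_wpM2l; first by rewrite invr_ge0 ltW.
  apply: le_trans (_ : \sum_(l < n) gamma0 <= _).
    by rewrite sumr_const card_ord mulr_natl.
  by apply: ler_sum => l _; exact: hg.
- move=> i j; rewrite /ps /Q.
  have h : expR (beta i) * \sum_l pair_mean theta beta l i j =
           expR (beta j) * \sum_l pair_mean theta beta l j i.
    rewrite !mulr_sumr; apply: eq_bigr => l _; exact: pair_mean_sym.
  transitivity (Z^-1 * d^-1 * (expR (beta i) * \sum_l pair_mean theta beta l i j)); first by ring.
  rewrite h; ring.
- move=> i; rewrite /spec_P mxE eqxx; congr (_ - _); apply: eq_bigr => k ki.
  by rewrite mxE eq_sym (negbTE ki).
- move=> i j ij; rewrite /spec_P mxE (negbTE ij) /Q -/d.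
  have e : \sum_(l < n) b2R R (Atrue (l, i)) * b2R R (Atrue (l, j)) * b2R R (X (l, i)) * (1 - b2R R (X (l, j)))
        = \sum_l Y R n m i j l X.
    by apply: eq_bigr => l _; rewrite /Atrue !ffunE /Y /b2R !mul1r.
  rewrite e -mulrBr -sumrB.
  have := hD i j ij; rewrite /Dev /mu => h.
  rewrite normrM ger0_norm ?invr_ge0 ?ltW //.
  by rewrite ltr_pdivrMl.
Qed.
End Link.


Section Pr.
Variable R : realType.
Variables (n m : nat) (theta : 'I_n -> R) (beta : 'I_m -> R).

Lemma W1 (A : {ffun 'I_n * 'I_m -> bool}) :
  \prod_(li : 'I_n * 'I_m) (if A li then (1:R) else 1 - 1) = if A == Atrue n m then 1 else 0.
Proof.
case: eqP => [->|hA]; first by rewrite big1 // => t _; rewrite /Atrue ffunE.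
case: (pickP (fun t => ~~ A t)) => [t Ht|H].
  by rewrite (bigD1 t) //= (negbTE Ht) subrr mul0r.
exfalso; apply: hA; apply/ffunP => t; rewrite /Atrue ffunE.
by have := H t; case: (A t).
Qed.

Lemma sp_eq (eps : R) : success_prob theta beta 1 eps =
  Ex (qq R n m theta beta) (fun X => if `[< success beta 1 eps (Atrue n m, X) >] then 1 else 0).
Proof.
rewrite /success_prob big_mkcond /=.
rewrite (eq_bigr (fun w => (fun A X => if `[< success beta 1 eps (A, X) >] then
           outcome_weight theta beta 1 (A, X) else 0) w.1 w.2)); last by case.
rewrite -(pair_bigA _ (fun A X => if `[< success beta 1 eps (A, X) >] then
           outcome_weight theta beta 1 (A, X) else 0)) /=.

rewrite (bigD1 (Atrue n m)) //= [X in _ + X]big1 ?addr0; last first.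
  move=> A hA; apply: big1 => X _; case: ifP => // _.
  by rewrite /outcome_weight /= W1 (negbTE hA) mul0r.
apply: eq_bigr => X _; rewrite /outcome_weight /= W1 eqxx mul1r.
by case: ifP; rewrite ?mulr1 ?mulr0.
Qed.

Lemma upper (eps : R) : success_prob theta beta 1 eps <= 1.
Proof.
rewrite sp_eq; apply: (@le_trans _ _ (Ex (qq R n m theta beta) (fun=> 1))); last by rewrite Ex_1.
by apply: (Ex_le (qq01 _ _ _ _ _)) => X; case: ifP.
Qed.

Lemma lower (dl eps : R) : (0 < n)%N -> (0 < m)%N -> 0 < dl ->
  (forall X, (forall i j, i != j -> `|Dev R n m theta beta i j X| <
       (3 / 2 * m%:R * n%:R * 1 ^+ 2) * dl) -> success beta 1 eps (Atrue n m, X)) ->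
  1 - m%:R ^+ 2 * (4 / 9 / (m%:R ^+ 2 * dl ^+ 2)) / n%:R <= success_prob theta beta 1 eps.
Proof.
move=> n0 m0 dl0 HX.
set d := 3 / 2 * m%:R * n%:R * 1 ^+ 2 in HX *.
have mR : (0 < m%:R :> R) by rewrite ltr0n.
have nR : (0 < n%:R :> R) by rewrite ltr0n.
have d0 : 0 < d by rewrite /d expr1n mulr1; apply: mulr_gt0 => //; apply: mulr_gt0 => //.
pose ind i j X : R := if (i != j) && (d * dl <= `|Dev R n m theta beta i j X|) then 1 else 0.
have ind0 i j X : 0 <= ind i j X by rewrite /ind; case: ifP.
have pw X : 1 + (-1) * \sum_i \sum_j ind i j X <=
    (if `[< success beta 1 eps (Atrue n m, X) >] then 1 else 0).
  have S0 : 0 <= \sum_i \sum_j ind i j X by do 2 (apply: sumr_ge0 => ? _).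
  case: ifP => hs; first lra.
  have [i [j [ij hij]]] : exists i j, i != j /\ d * dl <= `|Dev R n m theta beta i j X|.
    apply: contrapT => H; suff : `[< success beta 1 eps (Atrue n m, X) >] by rewrite hs.
    apply/asboolP; apply: HX => i j ij; rewrite ltNge; apply/negP => hle; apply: H.
    by exists i, j.
  have : 1 <= \sum_i \sum_j ind i j X.
    rewrite (bigD1 i) //= (bigD1 j) //= {1}/ind ij hij /=.
    have : 0 <= \sum_(j0 | j0 != j) ind i j0 X by apply: sumr_ge0.
    have : 0 <= \sum_(i0 | i0 != i) \sum_j ind i0 j X by do 2 (apply: sumr_ge0 => ? _).
    lra.
  lra.
set B := n%:R / (d * dl) ^+ 2.
have hB : B = 4 / 9 / (m%:R ^+ 2 * dl ^+ 2) / n%:R.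
  rewrite /B /d; field; by rewrite (gt_eqF nR) (gt_eqF dl0) (gt_eqF mR).
have Eind i j : Ex (qq R n m theta beta) (ind i j) <= B.
  case: (eqVneq i j) => [->|ij].
    rewrite (Ex_ext _ (fun=> 0)); last by move=> X; rewrite /ind eqxx.
    by rewrite Ex_const /B divr_ge0 // exprn_ge0 // ltW // mulr_gt0.
  have := @cheb R n m theta beta i j ij _ (mulr_gt0 d0 dl0).
  have e : Ex (qq R n m theta beta) (ind i j) = Ex (qq R n m theta beta)
      (fun x => if d * dl <= `|Dev R n m theta beta i j x| then 1 else 0).
    by apply: Ex_ext => X; rewrite /ind ij.
  by rewrite e.
rewrite sp_eq.
apply: le_trans (Ex_le (qq01 _ _ _ _ _) pw).
rewrite (Ex_add (fun=> 1) (fun X => -1 * \sum_i \sum_j ind i j X)).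
rewrite Ex_const (Ex_scal (-1) (fun X => \sum_i \sum_j ind i j X)).
rewrite (Ex_sum (fun i X => \sum_j ind i j X)).
rewrite (eq_bigr (fun i => \sum_j Ex (qq R n m theta beta) (ind i j))); last first.
  by move=> i _; rewrite (Ex_sum (fun j X => ind i j X)).
have : \sum_i \sum_j Ex (qq R n m theta beta) (ind i j) <= m%:R ^+ 2 * B.
  apply: (@le_trans _ _ (\sum_(i < m) \sum_(j < m) B)).
    by apply: ler_sum => i _; apply: ler_sum => j _; exact: (Eind i j).
  rewrite (eq_bigr (fun _ => B *+ m)); last by move=> i _; rewrite sumr_const card_ord.
  by rewrite sumr_const card_ord -[B *+ m]mulr_natl -[_ *+ m]mulr_natl mulrA -expr2.
move=> h.
have hB2 : m%:R ^+ 2 * B = m%:R ^+ 2 * (4 / 9 / (m%:R ^+ 2 * dl ^+ 2)) / n%:R by rewrite hB mulrA.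
rewrite -hB2; move: h; set S := \sum_i \sum_j _; move=> h.
lra.
Qed.
End Pr.

Theorem mainTheorem3 (R : realType) (m : nat) (beta : 'I_m -> R)
  (theta : forall n : nat, 'I_n -> R) (gamma0 : R) :
  (2 <= m)%N ->
  \sum_(i < m) beta i = 0 ->
  0 < gamma0 ->
  (forall (n : nat) (l : 'I_n) (i j : 'I_m), i != j ->
      gamma0 <= pair_mean (theta n) beta l i j) ->
  forall eps : R, 0 < eps ->
  (fun n : nat => success_prob (theta n) beta 1 eps) @ \oo --> (1 : R).
Proof.
move=> m2 sb g0 hg eps ep.
have m0 : (0 < m)%N by apply: leq_trans m2.
have mR : (0 < m%:R :> R) by rewrite ltr0n.
have mR1 : (1 <= m%:R :> R) by rewrite ler1n.
set Z := \sum_k expR (beta k).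
have Z0 : 0 < Z.
  rewrite /Z (bigD1 (Ordinal m0)) //=; apply: ltr_wpDr; last exact: expR_gt0.
  by apply: sumr_ge0 => k _; apply: ltW; apply: expR_gt0.
pose ps i := expR (beta i) / Z.
have ps0 i : 0 < ps i by apply: divr_gt0 => //; apply: expR_gt0.
have ps1 i : ps i <= 1.
  rewrite /ps ler_pdivrMr // mul1r /Z (bigD1 i) //=; apply: ler_wpDr => //.
  by apply: sumr_ge0 => k _; apply: ltW; apply: expR_gt0.
pose c := \prod_k ps k.
have c0 : 0 < c by apply: prodr_gt0 => k _.
have hc i : c <= ps i.
  rewrite /c (bigD1 i) //= -[X in _ <= X]mulr1; apply: ler_wpM2l; first exact: ltW.
  by apply: prodr_ile1 => k _; rewrite ltW //=.
set q0 := gamma0 / (3 / 2 * m%:R).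
have q00 : 0 < q0 by apply: divr_gt0 => //; apply: mulr_gt0.
set a := 8 * m%:R + 2 * eps.
have a0 : 0 < a by rewrite /a; lra.
set t := eps / a.
have ta : t * a = eps by rewrite /t divfK // gt_eqF.
have t0 : 0 < t by apply: divr_gt0.
have th : t <= 1/2.
  have h2 : 0 <= a - 2 * eps by rewrite /a; lra.
  have h3 := mulr_ge0 (ltW t0) h2.
  have h4 : t * a - 2 * t * eps >= 0 by lra.
  rewrite ta in h4.
  have h5 : 0 <= eps * (1 - 2 * t) by lra.
  rewrite pmulr_rge0 // in h5; lra.
have tep : 16 * m%:R * t ^+ 2 < eps ^+ 2.
  rewrite -ta.
  have h : 16 * m%:R < a ^+ 2.
    have ha : 0 <= a - 8 by rewrite /a; lra.
    have := mulr_ge0 ha (ltW a0).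
    have ae : a = 8 * m%:R + 2 * eps by [].
    rewrite expr2; nra.
  have t2 : 0 < t ^+ 2 by apply: exprn_gt0.
  have h' : 0 < a ^+ 2 - 16 * m%:R by rewrite subr_gt0.
  have := mulr_gt0 t2 h'.
  rewrite [(t * a) ^+ 2]exprMn; lra.
set dl := t * (c * q0) / (m%:R + 1).
have dl0 : 0 < dl by apply: divr_gt0; [apply: mulr_gt0 => //; apply: mulr_gt0 | lra].
set K := m%:R ^+ 2 * (4 / 9 / (m%:R ^+ 2 * dl ^+ 2)).
have K0 : 0 <= K.
  rewrite /K; apply: mulr_ge0; first exact: exprn_ge0 (ltW mR).
  apply: divr_ge0 => //; apply: mulr_ge0; apply: exprn_ge0; lra.
have bnd n : (0 < n)%N ->
    1 - K / n%:R <= success_prob (theta n) beta 1 eps <= 1.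
  move=> n0; apply/andP; split; last exact: upper.
  apply: lower => // X HX.
  apply: (@det_link R n m (theta n) beta gamma0 c t eps X) => //.
  - by move=> l i j; apply: hg.
  - exact: ltW.
apply/cvgrPdist_lt => e e0.
near=> n.
have n0 : (0 < n)%N by near: n; apply: nbhs_infty_gt.
have hN : ((Num.Def.trunc (K / e)).+1 <= n)%N by near: n; apply: nbhs_infty_ge.
have := bnd n n0 => /andP[h1 h2].
have nR : (0 < n%:R :> R) by rewrite ltr0n.
have hK : K / e < n%:R.
  apply: lt_le_trans (truncnS_gt (K / e)) _; by rewrite ler_nat.
have : K / n%:R < e.
  by rewrite ltr_pdivrMr // mulrC -ltr_pdivrMr.
rewrite ger0_norm; first lra.
lra.
Unshelve. all: by end_near.
Qed.
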